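(* Let $\mathfrak{q}$ be an $n\times n$ quantum parameter matrix over a field $k$ and $V$ a $k$-vector space with basis $v_1,\dots,v_n$. There exists a surjective group homomorphism $\pi:\mathrm{Aut}_{\mathrm{gr}}(S_{\mathfrak{q}}(V))\to\mathrm{Stab}(\mathfrak{q})$ with $\ker\pi=\prod_{B\in\mathcal{B}_{\mathfrak{q}}}\mathrm{GL}(V_B)$ and $\pi\circ\iota=\mathrm{Id}$.
   Context: An $n\times n$ quantum parameter matrix is a matrix $\mathfrak{q}=(q_{ij})$ over $k$ with $q_{ii}=1$ and $q_{ij}q_{ji}=1$ for all $i,j$. $S_{\mathfrak{q}}(V)$ is the $k$-algebra generated by $v_1,\dots,v_n$ with relations $v_jv_i=q_{ij}v_iv_j$, graded by $\deg v_i=1$; $\mathrm{Aut}_{\mathrm{gr}}(S_{\mathfrak{q}}(V))$ is the group of degree-preserving algebra automorphisms, viewed as a subgroup of $\mathrm{GL}(V)$ by restriction. $\mathcal{B}_{\mathfrak{q}}$ is the partition of $[n]$ with $i\sim j$ iff rows $i,j$ of $\mathfrak{q}$ are identical; its classes are the blocks. $V_B=\mathrm{span}\{v_i:i\in B\}$, and $\mathrm{GL}(V_B)$ is identified with the subgroup of $\mathrm{GL}(V)$ acting on $V_B$ and fixing $v_i$ for $i\notin B$. $\mathfrak{q}_{BC}=(q_{ij})_{i\in B,j\in C}$. With $r=|\mathcal{B}_{\mathfrak{q}}|$, $\mathfrak{S}_r$ permutes the blocks, and $\mathrm{Stab}(\mathfrak{q})=\{\sigma\in\mathfrak{S}_r:|\sigma(B)|=|B|\text{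 and }\mathfrak{q}_{BC}=\mathfrak{q}_{\sigma(B)\sigma(C)}\text{ for all blocks }B,C\}$. The map $\iota:\mathrm{Stab}(\mathfrak{q})\to\mathrm{Aut}_{\mathrm{gr}}(S_{\mathfrak{q}}(V))$ sends $\sigma$ to the unique invertible linear map on $V$ that permutes the basis vectors $v_i$, sends $V_B$ onto $V_{\sigma(B)}$ for each block $B$, and preserves the order $v_1<\dots<v_n$ within each block (this is an injective group homomorphism into $\mathrm{Aut}_{\mathrm{gr}}(S_{\mathfrak{q}}(V))$). *)

(* Defs.v *)
From HB Require Import structures.
From mathcomp Require Import all_boot all_order all_algebra all_fingroup.
Set Implicit Arguments. Unset Strict Implicit. Unset Printing Implicit Defensive.
Import GRing.Theory.
Local Open Scope ring_scope.

Section QuantumAffine.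
Variables (k : fieldType) (n : nat) (q : 'M[k]_n).

Definition qparam : Prop := (forall i, q i i = 1) /\ (forall i j, q i j * q j i = 1).

Definition qblock (i : 'I_n) : {set 'I_n} := [set j | [forall l, q i l == q j l]].

Definition qBlocks : {set {set 'I_n}} := [set qblock i | i : 'I_n].

(* The submatrix q_BC, rows/columns listed in increasing order. *)
Definition qsub (B C : {set 'I_n}) : seq (seq k) :=
  [seq [seq q i j | j <- enum C] | i <- enum B].

(* Stab(q), as a set of permutations of the blocks (permutations of
   {set 'I_n} supported on qBlocks, i.e. the symmetric group on the r blocks). *)
Definition qStab (s : {perm {set 'I_n}}) : bool :=
  [&& perm_on qBlocks s,
      [forall B in qBlocks, #|s B| == #|B|] &
      [forall B in qBlocks, forall C in qBlocks, qsub B C == qsub (s B) (s C)]].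

(* The tensor square V (x) V is identified with n x n matrices:
   v_a (x) v_b <-> delta_mx a b; g (x) g acts by X |-> g X g^T, where the
   matrix g acts on column coordinates: g v_b = sum_a g a b v_a. *)
Definition qrel (i j : 'I_n) : 'M[k]_n := delta_mx j i - q i j *: delta_mx i j.

(* g in GL(V) is (the restriction of) a degree-preserving automorphism of
   S_q(V) = T(V)/(R), R = span{v_j (x) v_i - q_ij v_i (x) v_j}, iff it is
   invertible and (g (x) g)(R) is contained in R. *)
Definition qAut (g : 'M[k]_n) : Prop :=
  g \in unitmx /\
  forall i j, exists c : 'M[k]_n,
    g *m qrel i j *m g^T = \sum_(a < n) \sum_(b < n) c a b *: qrel a b.

(* iota(sigma): sends v_b to the vector of sigma(B) in the same position
   (in increasing order) as v_b in its block B. *)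
Definition qiota_fun (s : {perm {set 'I_n}}) (b : 'I_n) : 'I_n :=
  nth b (enum (s (qblock b))) (index b (enum (qblock b))).

Definition qiota (s : {perm {set 'I_n}}) : 'M[k]_n :=
  \matrix_(a, b) (a == qiota_fun s b)%:R.

(* GL(V_B) as a subgroup of GL(V): invertible, fixes v_b for b notin B,
   maps V_B into V_B. *)
Definition inGLblock (B : {set 'I_n}) (g : 'M[k]_n) : Prop :=
  g \in unitmx /\
  (forall a b, b \notin B -> g a b = (a == b)%:R) /\
  (forall a b, b \in B -> a \notin B -> g a b = 0).

Definition inProdGLblocks (g : 'M[k]_n) : Prop :=
  exists h : {set 'I_n} -> 'M[k]_n,
    (forall B, B \in qBlocks -> inGLblock B (h B)) /\
    g = foldr (fun B acc => h B *m acc) 1%:M (enum qBlocks).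

End QuantumAffine.

(* Main.v *)
Require Import Defs.
From HB Require Import structures.
From mathcomp Require Import all_boot all_order all_algebra all_fingroup.
From mathcomp Require Import ring.
Set Implicit Arguments. Unset Strict Implicit. Unset Printing Implicit Defensive.
Import GRing.Theory.
Local Open Scope ring_scope.

Section Basics.
Variables (k : fieldType) (n : nat) (q : 'M[k]_n).

Lemma sum_only (V : nmodType) (F : 'I_n -> V) a :
  (forall m, m != a -> F m = 0) -> \sum_m F m = F a.
Proof. by move=> H; rewrite (bigD1 a) //= big1 ?addr0 // => m /H. Qed.

Lemma sum_delta2 (F : 'I_n -> 'I_n -> 'M[k]_n) x y :
  \sum_a \sum_b delta_mx x y a b *: F a b = F x y.
Proof.
rewrite (sum_only (a:=x)) => [|a ax]; last first.
  by apply: big1 => b _; rewrite mxE (negbTE ax) /= scale0r.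
rewrite (sum_only (a:=y)) => [|b yb]; first by rewrite mxE !eqxx /= scale1r.
by rewrite mxE eqxx (negbTE yb) /= scale0r.
Qed.

Lemma mul_delta_entry (A B : 'M[k]_n) a b x y :
  (A *m delta_mx a b *m B) x y = A x a * B b y.
Proof.
rewrite mxE (sum_only (a:=b)) => [|m mb]; last first.
  rewrite mxE (sum_only (a:=a)) => [|l la]; first by rewrite mxE eqxx (negbTE mb) /= mulr0 mul0r.
  by rewrite mxE (negbTE la) /= mulr0.
rewrite mxE (sum_only (a:=a)) => [|l la]; first by rewrite mxE !eqxx /= mulr1.
by rewrite mxE (negbTE la) /= mulr0.
Qed.

Lemma conj_entry (g : 'M[k]_n) i j x y :
  (g *m qrel q i j *m g^T) x y = g x j * g y i - q i j * (g x i * g y j).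
Proof.
rewrite /qrel mulmxBr mulmxBl -scalemxAr -scalemxAl.
have eB : forall A B : 'M[k]_n, (A - B) x y = A x y - B x y by move=> A B; rewrite !mxE.
have eZ : forall (c : k) (A : 'M[k]_n), (c *: A) x y = c * A x y by move=> c A; rewrite !mxE.
by rewrite eB eZ !mul_delta_entry !mxE.
Qed.

Lemma span_entry (c : 'M[k]_n) x y :
  (\sum_a \sum_b c a b *: qrel q a b) x y = c y x - c x y * q x y.
Proof.
have E : \sum_a \sum_b c a b *: qrel q a b =
   \sum_a \sum_b c a b *: delta_mx b a - \sum_a \sum_b (c a b * q a b) *: delta_mx a b.
  rewrite -sumrB; apply: eq_bigr => a _; rewrite -sumrB; apply: eq_bigr => b _.
  by rewrite /qrel scalerBr scalerA.
have eB : forall A B : 'M[k]_n, (A - B) x y = A x y - B x y by move=> A B; rewrite !mxE.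
rewrite E eB !summxE; congr (_ - _).
  rewrite (sum_only (a:=y)) => [|a ay]; last first.
    by rewrite summxE; apply: big1 => b _; rewrite !mxE (eq_sym y) (negbTE ay) andbF /= mulr0.
  rewrite summxE (sum_only (a:=x)) => [|b bx]; first by rewrite !mxE !eqxx /= mulr1.
  by rewrite !mxE (eq_sym x) (negbTE bx) /= mulr0.
rewrite (sum_only (a:=x)) => [|a ax]; last first.
  by rewrite summxE; apply: big1 => b _; rewrite !mxE (eq_sym x) (negbTE ax) /= mulr0.
rewrite summxE (sum_only (a:=y)) => [|b bx]; first by rewrite !mxE !eqxx /= mulr1.
by rewrite !mxE (eq_sym y) (negbTE bx) andbF /= mulr0.
Qed.

Lemma unit_perm (g : 'M[k]_n) : g \in unitmx -> exists s : 'S_n, forall i, g i (s i) != 0.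
Proof.
rewrite unitmxE unitfE => Hd.
case: (boolP [exists s : 'S_n, [forall i, g i (s i) != 0]]) =>
   [/existsP [s /forallP H]|/existsPn H]; first by exists s.
exfalso; move/eqP: Hd; apply; rewrite /determinant; apply: big1 => s _.
have := H s; rewrite negb_forall => /existsP [i]; rewrite negbK => /eqP Hi.
by rewrite (bigD1 i) //= Hi mul0r mulr0.
Qed.

Lemma col_nz (g : 'M[k]_n) j : g \in unitmx -> exists i, g i j != 0.
Proof. by move=> /unit_perm [s Hs]; exists (s^-1 j)%g; have := Hs (s^-1 j)%g; rewrite permKV. Qed.

Lemma row_nz (g : 'M[k]_n) i : g \in unitmx -> exists j, g i j != 0.
Proof. by move=> /unit_perm [s Hs]; exists (s i). Qed.

Lemma unit_rows (g : 'M[k]_n) c d (l : k) :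
  g \in unitmx -> c != d -> (forall m, g d m = l * g c m) -> False.
Proof.
move=> Hu cd H.
pose v : 'rV[k]_n := delta_mx 0 d - l *: delta_mx 0 c.
have v0 : v *m g = 0.
  by apply/rowP => m; rewrite /v mulmxBl -scalemxAl -!rowE !mxE H subrr.
have : v = 0 by rewrite -(mulmxK Hu v) v0 mul0mx.
move/rowP/(_ d); rewrite !mxE !eqxx eq_sym (negbTE cd) /= mulr0 subr0 => /eqP.
by rewrite oner_eq0.
Qed.

End Basics.
Section Defs2.
Variables (k : fieldType) (n : nat) (q : 'M[k]_n).
Definition Pg (g : 'M[k]_n) (s : {perm {set 'I_n}}) : bool :=
  perm_on (qBlocks q) s &&
  [forall B in qBlocks q, forall b in B, forall a, (a \notin s B) ==> (g a b == 0)].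
Definition pi (g : 'M[k]_n) : {perm {set 'I_n}} := odflt 1%g [pick s | Pg g s].
Definition Fg (g : 'M[k]_n) (B : {set 'I_n}) : {set 'I_n} :=
  if B \in qBlocks q then
    [set c | [exists a, [exists b in B, (g a b != 0) && (c \in qblock q a)]]]
  else B.
End Defs2.

Section Blocks.
Variables (k : fieldType) (n : nat) (q : 'M[k]_n).
Hypothesis qP : qparam q.

Lemma q11 i : q i i = 1. Proof. by case: qP. Qed.
Lemma qqV i j : q i j * q j i = 1. Proof. by case: qP. Qed.

Lemma qblockP i j : reflect (forall l, q i l = q j l) (j \in qblock q i).
Proof. rewrite inE; apply: (iffP forallP) => H l; [exact/eqP/H | by rewrite H]. Qed.
Lemma qblock_self i : i \in qblock q i. Proof. by apply/qblockP. Qed.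
Lemma qblock_eq i j : (forall l, q i l = q j l) -> qblock q i = qblock q j.
Proof.
move=> H; apply/setP => x; apply/qblockP/qblockP => H' l.
  by rewrite -H H'.
by rewrite H H'.
Qed.
Lemma qblock_mem i j : j \in qblock q i -> qblock q j = qblock q i.
Proof. by move/qblockP=> H; apply: qblock_eq => l; rewrite H. Qed.
Lemma qcol i j l : j \in qblock q i -> q l i = q l j.
Proof.
move/qblockP=> H. have h1 := qqV i l; have h2 := qqV j l. rewrite -H in h2.
have nz : q i l != 0.
  by apply/eqP=> e; move: h1; rewrite e mul0r => /eqP; rewrite eq_sym oner_eq0.
by apply: (mulfI nz); rewrite h1 h2.
Qed.
Lemma qBlocksP B : reflect (exists i, B = qblock q i) (B \in qBlocks q).
Proof. by apply: (iffP imsetP) => [[i _ ->]|[i ->]]; exists i. Qed.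
Lemma qblock_in i : qblock q i \in qBlocks q. Proof. by apply/qBlocksP; exists i. Qed.
Lemma blockE B b : B \in qBlocks q -> b \in B -> B = qblock q b.
Proof. by case/qBlocksP=> i -> /qblock_mem ->. Qed.
Lemma block_disj B C x : B \in qBlocks q -> C \in qBlocks q -> x \in B -> x \in C -> B = C.
Proof. by move=> hB hC xB xC; rewrite (blockE hB xB) (blockE hC xC). Qed.

Lemma qAut_D g : qAut q g -> forall i j x, g x i * g x j * (1 - q i j) = 0.
Proof.
move=> [_ H] i j x; have [c Hc] := H i j.
have := congr1 (fun M : 'M[k]_n => M x x) Hc; rewrite /= conj_entry span_entry q11 mulr1 subrr => E.
by rewrite -E; ring.
Qed.

Lemma qAut_S g : qAut q g -> forall i j x y,
  g x j * g y i * (1 - q x y * q i j) + g x i * g y j * (q x y - q i j) = 0.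
Proof.
move=> [_ H] i j x y; have [c Hc] := H i j.
have E1 := congr1 (fun M : 'M[k]_n => M x y) Hc; have E2 := congr1 (fun M : 'M[k]_n => M y x) Hc.
rewrite /= !conj_entry !span_entry in E1 E2.
have -> : g x j * g y i * (1 - q x y * q i j) + g x i * g y j * (q x y - q i j) =
  (g x j * g y i - q i j * (g x i * g y j)) + q x y * (g y j * g x i - q i j * (g y i * g x j)) by ring.
rewrite E1 E2. have h := qqV x y.
have -> : c y x - c x y * q x y + q x y * (c x y - c y x * q y x) = c y x * (1 - q x y * q y x) by ring.
by rewrite h subrr mulr0.
Qed.

Lemma m3 (a b c : k) : a * b * c = 0 -> a != 0 -> b != 0 -> c = 0.
Proof. by move=> /eqP H a0 b0; apply/eqP; move: H; rewrite !mulf_eq0 (negbTE a0) (negbTE b0). Qed.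
Lemma m2 (a b : k) : a * b = 0 -> b != 0 -> a = 0.
Proof. by move=> /eqP H b0; apply/eqP; move: H; rewrite !mulf_eq0 (negbTE b0) orbF. Qed.
Lemma mulneq0 (a b : k) : a * b != 0 -> (a != 0) /\ (b != 0).
Proof. by rewrite mulf_eq0 negb_or => /andP. Qed.

Lemma map2_eq (s1 s2 t1 t2 : seq 'I_n) : size s1 = size s2 -> size t1 = size t2 ->
  (forall x y x' y', x \in s1 -> y \in t1 -> x' \in s2 -> y' \in t2 -> q x y = q x' y') ->
  [seq [seq q i j | j <- t1] | i <- s1] = [seq [seq q i j | j <- t2] | i <- s2].
Proof.
elim: s1 s2 => [|x s1 IH] [|x' s2] //= [e1] et H.
congr (_ :: _); last first.
  apply: IH => // a b a' b' aS bT a'S b'T; apply: H => //; by rewrite inE ?aS ?a'S orbT.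
have Hx : forall y y', y \in t1 -> y' \in t2 -> q x y = q x' y'.
  by move=> y y' yt y't; apply: H; rewrite ?inE ?eqxx.
clear H IH; elim: t1 t2 et Hx => [|y t1 IHt] [|y' t2] //= [et] Hx.
congr (_ :: _); first by apply: Hx; rewrite inE eqxx.
by apply: IHt => // a b aT bT; apply: Hx; rewrite inE ?aT ?bT orbT.
Qed.

Section G.
Variable g : 'M[k]_n.
Hypothesis gA : qAut q g.
Let gU : g \in unitmx := proj1 gA.

Lemma claimA c i d j : g c i != 0 -> g d j != 0 -> q c d = q i j.
Proof.
move=> ci dj; apply/eqP; apply/negPn/negP => ne.
have S := qAut_S gA; have D := qAut_D gA.
have cjdi : g c j * g d i != 0.
  apply/eqP => e; have h := S i j c d; rewrite e mul0r add0r in h.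
  by move: ne; rewrite (subr0_eq (m3 h ci dj)) eqxx.
have [cj di] := mulneq0 cjdi.
have qij1 : q i j = 1 by apply/esym/subr0_eq; exact: m3 (D i j c) ci cj.
rewrite qij1 in ne.
have cd : c != d by apply: contraNneq ne => ->; rewrite q11.
have prop : forall m, g d m * g c i = g d i * g c m.
  move=> m; case: (eqVneq (g c m) 0) => [cm0|cm].
    rewrite cm0 mulr0; case: (eqVneq (g d m) 0) => [->|dm]; first by rewrite mul0r.
    have qim : q c d = q i m.
      have h := S i m c d; rewrite cm0 !mul0r add0r in h.
      exact: subr0_eq (m3 h ci dm).
    have h := m3 (D i m d) di dm.
    by move: ne; rewrite qim -(subr0_eq h) eqxx.
  have qim : q i m = 1 by apply/esym/subr0_eq; exact: m3 (D i m c) ci cm.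
  have := S i m c d; rewrite qim mulr1 => h.
  have h2 : (g c m * g d i - g c i * g d m) * (1 - q c d) = 0 by rewrite -h; ring.
  have ne' : 1 - q c d != 0 by rewrite subr_eq0 eq_sym.
  have e := subr0_eq (m2 h2 ne').
  by rewrite mulrC -e mulrC.
apply: (unit_rows (l := g d i / g c i) gU cd) => m.
by rewrite -[g d m](mulfK ci) prop mulrAC.
Qed.


Lemma rows_eq a a' b b' : g a b != 0 -> g a' b' != 0 ->
  (forall l, q b l = q b' l) -> forall l, q a l = q a' l.
Proof.
move=> ab ab' H l; have [j lj] := row_nz l gU.
by rewrite (claimA ab lj) (claimA ab' lj) H.
Qed.

Lemma cols_eq a a' b b' : g a b != 0 -> g a' b' != 0 ->
  (forall l, q a l = q a' l) -> forall l, q b l = q b' l.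
Proof.
move=> ab ab' H l; have [d dl] := col_nz l gU.
by rewrite -(claimA ab dl) -(claimA ab' dl) H.
Qed.

Lemma FgE B b a : B \in qBlocks q -> b \in B -> g a b != 0 -> Fg q g B = qblock q a.
Proof.
move=> hB bB ab; rewrite /Fg hB; apply/setP => c; rewrite inE.
apply/existsP/idP => [[a' /existsP [b' /andP [b'B /andP [ab' ca']]]]|ca].
  have -> : qblock q a = qblock q a'.
    apply: qblock_eq; apply: (rows_eq ab ab'); apply/qblockP.
    by rewrite -(blockE hB bB).
  exact: ca'.
by exists a; apply/existsP; exists b; rewrite bB ab ca.
Qed.

Lemma Fg_block B : B \in qBlocks q -> Fg q g B \in qBlocks q.
Proof.
move=> hB; case/qBlocksP: (hB) => i Bi.
have [a ai] := col_nz i gU.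
have iB : i \in B by rewrite Bi qblock_self.
by rewrite (FgE hB iB ai) qblock_in.
Qed.

Lemma Fg_mem B i : B \in qBlocks q -> i \in Fg q g B -> Fg q g B = qblock q i.
Proof.
move=> hB; case/qBlocksP: (hB) => b Bb.
have [a ab] := col_nz b gU.
have bB : b \in B by rewrite Bb qblock_self.
by rewrite (FgE hB bB ab) => /qblock_mem ->.
Qed.

Lemma Fg_inj_blocks B C : B \in qBlocks q -> C \in qBlocks q -> Fg q g B = Fg q g C -> B = C.
Proof.
move=> /qBlocksP [i ->] /qBlocksP [j ->].
have [a ai] := col_nz i gU; have [a' aj] := col_nz j gU.
rewrite (FgE (qblock_in i) (qblock_self i) ai) (FgE (qblock_in j) (qblock_self j) aj) => e.
apply: qblock_eq; apply: (cols_eq ai aj); apply/qblockP.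
by rewrite e qblock_self.
Qed.

Lemma Fg_inj : injective (Fg q g).
Proof.
move=> B C; case hB: (B \in qBlocks q); case hC: (C \in qBlocks q).
- exact: Fg_inj_blocks.
- by rewrite {2}/Fg hC => e; move: (Fg_block hB); rewrite e hC.
- by rewrite {1}/Fg hB => e; move: (Fg_block hC); rewrite -e hB.
- by rewrite /Fg hB hC.
Qed.

Lemma Fg_card B : B \in qBlocks q -> #|Fg q g B| = #|B|.
Proof.
move=> hB; have [s Hs] := unit_perm gU.
have -> : Fg q g B = (s @^-1: B)%g.
  apply/setP => i; rewrite inE; apply/idP/idP => [iF|siB].
    have e := FgE (qblock_in (s i)) (qblock_self (s i)) (Hs i).
    have : Fg q g B = Fg q g (qblock q (s i)) by rewrite e (Fg_mem hB iF).
    by move/Fg_inj_blocks => -> //; rewrite ?qblock_self ?qblock_in.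
  by rewrite (FgE hB siB (Hs i)) qblock_self.
by rewrite card_preimset //; exact: perm_inj.
Qed.

Lemma Fg_q B C x y x' y' : B \in qBlocks q -> C \in qBlocks q -> x \in B -> y \in C ->
  x' \in Fg q g B -> y' \in Fg q g C -> q x y = q x' y'.
Proof.
move=> hB hC xB yC.
have [a ax] := col_nz x gU; have [d dy] := col_nz y gU.
rewrite (FgE hB xB ax) (FgE hC yC dy) => x'F y'F.
rewrite -(claimA ax dy) (qcol a y'F).
by move/qblockP: x'F => ->.
Qed.


Definition sg := perm Fg_inj.

Lemma sg_on : perm_on (qBlocks q) sg.
Proof. by apply/subsetP => B; rewrite inE permE /Fg; case: ifP => // _; rewrite eqxx. Qed.

Lemma sg_stab : qStab q sg.
Proof.
apply/and3P; split; first exact: sg_on.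
  by apply/forall_inP => B hB; rewrite permE Fg_card.
apply/forall_inP => B hB; apply/forall_inP => C hC; rewrite !permE; apply/eqP.
apply: map2_eq; first by rewrite -!cardE Fg_card.
  by rewrite -!cardE Fg_card.
by move=> x y x' y'; rewrite !mem_enum; exact: Fg_q.
Qed.

Lemma sg_P : Pg q g sg.
Proof.
apply/andP; split; first exact: sg_on.
apply/forall_inP => B hB; apply/forall_inP => b bB; apply/forallP => a; apply/implyP.
by apply: contraR => ab; rewrite permE (FgE hB bB ab) qblock_self.
Qed.

End G.

Lemma core g : qAut q g -> exists s, Pg q g s && qStab q s.
Proof. by move=> gA; exists (sg gA); rewrite sg_P sg_stab. Qed.

Lemma Pg_uniq g s t : g \in unitmx -> Pg q g s -> Pg q g t -> s = t.
Proof.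
move=> gU /andP [sOn /forall_inP Hs] /andP [tOn /forall_inP Ht]; apply/permP => B.
case hB: (B \in qBlocks q); last by rewrite (out_perm sOn) ?hB // (out_perm tOn) ?hB.
case/qBlocksP: (hB) => i Bi; have [a ai] := col_nz i gU.
have iB : i \in B by rewrite Bi qblock_self.
have aS : a \in s B.
  case: (boolP (a \in s B)) => // aN.
  by move: (Hs B hB) => /forall_inP /(_ i iB) /forallP /(_ a); rewrite aN (negbTE ai).
have aT : a \in t B.
  case: (boolP (a \in t B)) => // aN.
  by move: (Ht B hB) => /forall_inP /(_ i iB) /forallP /(_ a); rewrite aN (negbTE ai).
by apply: block_disj aS aT; rewrite perm_closed.
Qed.

Lemma pi_eq g s : g \in unitmx -> Pg q g s -> pi q g = s.
Proof.
move=> gU Hs; rewrite /pi; case: pickP => [t Ht|H] /=; first exact: Pg_uniq gU Ht Hs.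
by move: (H s); rewrite Hs.
Qed.

Lemma Pg_mul g h s t : Pg q g s -> Pg q h t -> Pg q (g *m h) (t * s)%g.
Proof.
move=> /andP [sOn /forall_inP Hs] /andP [tOn /forall_inP Ht]; apply/andP; split.
  exact: perm_onM.
apply/forall_inP => B hB; apply/forall_inP => b bB; apply/forallP => a; apply/implyP.
rewrite permM => aN; rewrite mxE; apply/eqP; apply: big1 => m _.
case: (boolP (m \in t B)) => mT.
  have tB : t B \in qBlocks q by rewrite perm_closed.
  by move: (Hs _ tB) => /forall_inP /(_ m mT) /forallP /(_ a) /implyP /(_ aN) /eqP ->; rewrite mul0r.
by move: (Ht _ hB) => /forall_inP /(_ b bB) /forallP /(_ m) /implyP /(_ mT) /eqP ->; rewrite mulr0.
Qed.

Definition Dm (S : {set 'I_n}) : 'M[k]_n := \matrix_(a, b) ((a == b) && (b \in S))%:R.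
Definition presB (S : {set 'I_n}) (M : 'M[k]_n) := forall a b, b \in S -> a \notin S -> M a b = 0.
Definition pres_all (g : 'M[k]_n) := forall B, B \in qBlocks q -> presB B g.
Definition hmat (g : 'M[k]_n) B := g *m Dm B + (1%:M - Dm B).
Definition Useq (l : seq {set 'I_n}) := foldr (fun B acc => B :|: acc) set0 l.

Lemma entryD (A B : 'M[k]_n) a b : (A + B) a b = A a b + B a b. Proof. by rewrite mxE. Qed.
Lemma entryB (A B : 'M[k]_n) a b : (A - B) a b = A a b - B a b. Proof. by rewrite !mxE. Qed.

Lemma mulD_r (A : 'M[k]_n) (S : {set 'I_n}) a b : (A *m Dm S) a b = A a b * (b \in S)%:R.
Proof.
rewrite mxE (sum_only (a:=b)) => [|m mb]; first by rewrite mxE eqxx.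
by rewrite mxE (negbTE mb) /= mulr0.
Qed.

Lemma mulD_l (A : 'M[k]_n) (S : {set 'I_n}) a b : (Dm S *m A) a b = (a \in S)%:R * A a b.
Proof.
rewrite mxE (sum_only (a:=a)) => [|m ma]; first by rewrite mxE eqxx.
by rewrite mxE (eq_sym a) (negbTE ma) /= mul0r.
Qed.

Lemma DD (S T : {set 'I_n}) : Dm S *m Dm T = Dm (S :&: T).
Proof.
apply/matrixP => a b; rewrite mulD_r !mxE inE.
by case: (a == b); case: (b \in S); case: (b \in T); rewrite /= ?mulr1n ?mulr0n ?mulr1 ?mulr0.
Qed.

Lemma DU (S T : {set 'I_n}) : (forall x, x \in S -> x \notin T) -> Dm S + Dm T = Dm (S :|: T).
Proof.
move=> H; apply/matrixP => a b; rewrite !mxE inE.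
case: (a == b) => /=; last by rewrite addr0.
case bS: (b \in S); case bT: (b \in T) => /=; rewrite ?addr0 ?add0r //.
by move: (H b); rewrite bS bT => /(_ isT).
Qed.

Lemma D0 : Dm set0 = 0.
Proof. by apply/matrixP => a b; rewrite !mxE inE andbF. Qed.
Lemma DT : Dm setT = 1%:M.
Proof. by apply/matrixP => a b; rewrite !mxE inE andbT. Qed.

Lemma Pg1 g : Pg q g 1 -> pres_all g.
Proof.
move=> /andP [_ /forall_inP H] B hB a b bB aB; apply/eqP.
by move: (H B hB) => /forall_inP /(_ b bB) /forallP /(_ a) /implyP; rewrite perm1; apply.
Qed.

Lemma pres_Pg1 g : pres_all g -> Pg q g 1.
Proof.
move=> H; apply/andP; split; first exact: perm_on1.
apply/forall_inP => B hB; apply/forall_inP => b bB; apply/forallP => a; apply/implyP.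
by rewrite perm1 => aB; apply/eqP; exact: (H B hB a b bB aB).
Qed.

Lemma comm_D g B : pres_all g -> B \in qBlocks q -> g *m Dm B = Dm B *m g.
Proof.
move=> H hB; apply/matrixP => a b; rewrite mulD_r mulD_l.
case bB: (b \in B); case aB: (a \in B); rewrite /= ?mulr1n ?mulr0n ?mulr1 ?mul1r ?mulr0 ?mul0r //.
  by rewrite (H B hB a b) ?aB.
apply/esym; apply: (H (qblock q b) (qblock_in b) a b (qblock_self b)).
apply/negP => aC; have e := block_disj hB (qblock_in b) aB aC.
by move: bB; rewrite e qblock_self.
Qed.

Lemma alg2 (g D E : 'M[k]_n) : D *m E = 0 -> g *m D = D *m g ->
  (g *m D + (1%:M - D)) *m (g *m E + (1%:M - E)) = g *m (D + E) + (1%:M - (D + E)).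
Proof.
move=> DE comm.
rewrite mulmxDr !(mulmxDl (g *m D) (1%:M - D)).
have t1 : g *m D *m (g *m E) = 0.
  by rewrite -mulmxA (mulmxA D) -comm -(mulmxA g D) DE !mulmx0.
have t2 : (1%:M - D) *m (g *m E) = g *m E.
  by rewrite mulmxBl mul1mx mulmxA -comm -mulmxA DE mulmx0 subr0.
have t3 : g *m D *m (1%:M - E) = g *m D.
  by rewrite mulmxBr mulmx1 -mulmxA DE mulmx0 subr0.
have t4 : (1%:M - D) *m (1%:M - E) = 1%:M - D - E.
  by rewrite mulmxBl mul1mx mulmxBr mulmx1 DE subr0 addrAC.
rewrite t1 t2 t3 t4 mulmxDr add0r opprD !addrA.
by rewrite [g *m E + g *m D]addrC.
Qed.

Lemma hmat_unit g B : pres_all g -> g \in unitmx -> B \in qBlocks q -> hmat g B \in unitmx.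
Proof.
move=> H gU hB.
have DE : Dm B *m (1%:M - Dm B) = 0 by rewrite mulmxBr mulmx1 DD setIid subrr.
have := alg2 DE (comm_D H hB).
have e1 : Dm B + (1%:M - Dm B) = 1%:M by rewrite addrC subrK.
rewrite e1 mulmx1 subrr addr0 => e.
by move: gU; rewrite -{1}e unitmx_mul => /andP [].
Qed.

Lemma hmat_entry g B a b :
  hmat g B a b = g a b * (b \in B)%:R + ((a == b)%:R - ((a == b) && (b \in B))%:R).
Proof. by rewrite /hmat entryD entryB mulD_r !mxE. Qed.

Lemma hmat_GL g B : pres_all g -> g \in unitmx -> B \in qBlocks q -> inGLblock B (hmat g B).
Proof.
move=> H gU hB; split; first exact: hmat_unit.
split=> a b bB.
  by rewrite hmat_entry (negbTE bB) andbF /= ?mulr0n mulr0 add0r subr0.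
move=> aB; rewrite hmat_entry bB (H B hB a b bB aB) mul0r add0r.
have ab : (a == b) = false by apply: contraNF aB => /eqP ->.
by rewrite ab /= subrr.
Qed.

Lemma Useq_has x l : (x \in Useq l) = has (fun C : {set 'I_n} => x \in C) l.
Proof. by elim: l => [|C l IH] /=; rewrite ?inE // IH. Qed.

Lemma foldr_prod g l : pres_all g -> uniq l -> all (mem (qBlocks q)) l ->
  foldr (fun B acc => hmat g B *m acc) 1%:M l = g *m Dm (Useq l) + (1%:M - Dm (Useq l)).
Proof.
move=> H; elim: l => [|B l IH] /=; first by rewrite D0 mulmx0 add0r subr0.
move=> /andP [Bl ul] /andP [hB al]; rewrite IH //.
have disj : forall x, x \in B -> x \notin Useq l.
  move=> x xB; rewrite Useq_has; apply/hasP => [[C Cl xC]].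
  have hC : C \in qBlocks q by move/allP: al => /(_ C Cl).
  by move: Bl; rewrite (block_disj hB hC xB xC) Cl.
rewrite -DU //; apply: alg2; last exact: comm_D.
rewrite DD (_ : B :&: Useq l = set0) ?D0 //.
apply/setP => x; rewrite inE in_set0; apply/negP => /andP [xB xU].
by move: (disj x xB); rewrite xU.
Qed.

Lemma Useq_all : Useq (enum (qBlocks q)) = setT.
Proof.
apply/setP => x; rewrite inE Useq_has; apply/hasP; exists (qblock q x).
  by rewrite mem_enum qblock_in.
exact: qblock_self.
Qed.

Lemma ker_fwd g : qAut q g -> Pg q g 1 -> inProdGLblocks q g.
Proof.
move=> gA P1; have H := Pg1 P1; have gU := proj1 gA.
exists (hmat g); split; first by move=> B hB; exact: hmat_GL.
rewrite foldr_prod // ?enum_uniq //; last by apply/allP => B; rewrite mem_enum.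
by rewrite Useq_all DT mulmx1 subrr addr0.
Qed.

Lemma presB_mul (S : {set 'I_n}) (A B : 'M[k]_n) : presB S A -> presB S B -> presB S (A *m B).
Proof.
move=> HA HB a b bS aS; rewrite mxE; apply: big1 => m _.
by case: (boolP (m \in S)) => mS; [rewrite HA // mul0r | rewrite HB // mulr0].
Qed.

Lemma presB1 (S : {set 'I_n}) : presB S 1%:M.
Proof.
move=> a b bS aS; rewrite mxE.
have : a != b by apply: contraNneq aS => ->.
by move/negbTE => ->; rewrite /= mulr0n.
Qed.

Lemma ker_bwd g : inProdGLblocks q g -> Pg q g 1.
Proof.
move=> [h [Hh ->]]; apply: pres_Pg1 => C hC.
have Hp : forall B, B \in qBlocks q -> presB C (h B).
  move=> B hB a b bC aC; have [_ [Hoff Hin]] := Hh B hB.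
  case: (eqVneq B C) => [eBC|BC]; first by rewrite -eBC in bC aC; exact: Hin.
  have bB : b \notin B.
    by apply/negP => bB; move/eqP: BC; apply; exact: block_disj hB hC bB bC.
  rewrite Hoff //.
  have : a != b by apply: contraNneq aC => ->.
  by move/negbTE => ->; rewrite /= mulr0n.
have : all (mem (qBlocks q)) (enum (qBlocks q)) by apply/allP => B; rewrite mem_enum.
elim: (enum (qBlocks q)) => [|B l IH] /=; first by move=> _; exact: presB1.
by case/andP => hB al; apply: presB_mul; [exact: Hp | exact: IH].
Qed.

Lemma stab_parts s : qStab q s -> [/\ perm_on (qBlocks q) s,
  (forall B, B \in qBlocks q -> #|s B| = #|B|) &
  (forall B C, B \in qBlocks q -> C \in qBlocks q -> qsub q B C = qsub q (s B) (s C))].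
Proof.
case/and3P => On /forall_inP Hc /forall_inP Hq; split => //.
  by move=> B hB; apply/eqP; exact: Hc.
by move=> B C hB hC; apply/eqP; move: (Hq B hB) => /forall_inP /(_ C hC).
Qed.

Lemma tau_in s b : qStab q s -> qiota_fun q s b \in s (qblock q b).
Proof.
case/stab_parts => On Hc _; rewrite /qiota_fun -mem_enum; apply: mem_nth.
by rewrite -cardE Hc ?qblock_in // cardE index_mem mem_enum qblock_self.
Qed.

Lemma tau_inj s : qStab q s -> injective (qiota_fun q s).
Proof.
move=> Ss b b' e; have [On Hc _] := stab_parts Ss.
have hb := tau_in b Ss; have hb' := tau_in b' Ss; rewrite e in hb.
have eB : qblock q b = qblock q b'.
  apply: (@perm_inj _ s); apply: block_disj hb hb'; by rewrite (perm_closed _ On) qblock_in.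
move: e; rewrite /qiota_fun eB.
set eS := enum (s (qblock q b')); set eB' := enum (qblock q b').
have bin : b \in eB' by rewrite mem_enum -eB qblock_self.
have b'in : b' \in eB' by rewrite mem_enum qblock_self.
have sz : size eS = size eB' by rewrite /eS /eB' -!cardE Hc ?qblock_in.
have ib : (index b eB' < size eS)%N by rewrite sz index_mem.
have ib' : (index b' eB' < size eS)%N by rewrite sz index_mem.
rewrite (set_nth_default b' b ib) => e.
have : index b eB' = index b' eB'.
  by apply/eqP; rewrite -(nth_uniq b' ib ib' (enum_uniq _)) e.
exact: (index_inj b bin b'in).
Qed.

Lemma tau_q s i j : qStab q s -> q (qiota_fun q s i) (qiota_fun q s j) = q i j.
Proof.
move=> Ss; have [On Hc Hq] := stab_parts Ss.
have e := Hq _ _ (qblock_in i) (qblock_in j).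
have ii : i \in enum (qblock q i) by rewrite mem_enum qblock_self.
have jj : j \in enum (qblock q j) by rewrite mem_enum qblock_self.
have szi : (index i (enum (qblock q i)) < size (enum (qblock q i)))%N by rewrite index_mem.
have szj : (index j (enum (qblock q j)) < size (enum (qblock q j)))%N by rewrite index_mem.
have szi' : (index i (enum (qblock q i)) < size (enum (s (qblock q i))))%N.
  by rewrite -cardE Hc ?qblock_in // cardE.
have szj' : (index j (enum (qblock q j)) < size (enum (s (qblock q j))))%N.
  by rewrite -cardE Hc ?qblock_in // cardE.
have := congr1 (fun L => nth 0 (nth [::] L (index i (enum (qblock q i)))) (index j (enum (qblock q j)))) e.
rewrite /qsub /= (nth_map i) // (nth_map j) // (nth_map i) // (nth_map j) // !nth_index //.
Qed.

Lemma qiota_perm s (Ss : qStab q s) : qiota q s = (perm_mx (perm (tau_inj Ss)))^T.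
Proof. by apply/matrixP => a b; rewrite !mxE permE eq_sym. Qed.

Lemma qiota_aut s : qStab q s -> qAut q (qiota q s).
Proof.
move=> Ss; split; first by rewrite (qiota_perm Ss) unitmx_tr unitmx_perm.
move=> i j; exists (delta_mx (qiota_fun q s i) (qiota_fun q s j)); rewrite sum_delta2.
apply/matrixP => x y; rewrite conj_entry /qrel entryB !mxE tau_q //.
by case: (x == qiota_fun q s j); case: (y == qiota_fun q s i);
   case: (x == qiota_fun q s i); case: (y == qiota_fun q s j);
   rewrite /= ?mulr1n ?mulr0n ?mulr1 ?mulr0 ?mul1r ?mul0r.
Qed.

Lemma qiota_P s : qStab q s -> Pg q (qiota q s) s.
Proof.
move=> Ss; have [On _ _] := stab_parts Ss.
apply/andP; split => //.
apply/forall_inP => B hB; apply/forall_inP => b bB; apply/forallP => a; apply/implyP => aN.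
rewrite mxE; have : a != qiota_fun q s b.
  by apply: contraNneq aN => ->; rewrite (blockE hB bB) tau_in.
by move/negbTE => ->; rewrite /= mulr0n eqxx.
Qed.

Lemma main : exists pi : 'M[k]_n -> {perm {set 'I_n}},
    (forall g, qAut q g -> qStab q (pi g)) /\
    (forall g h, qAut q g -> qAut q h ->
       forall B, pi (g *m h) B = pi g (pi h B)) /\
    (forall s, qStab q s -> exists2 g, qAut q g & pi g = s) /\
    (forall g, qAut q g -> (pi g = 1%g <-> inProdGLblocks q g)) /\
    (forall s, qStab q s -> qAut q (qiota q s) /\ pi (qiota q s) = s).
Proof.
exists (pi q); split; [|split; [|split; [|split]]].
- move=> g gA; have [s /andP [Ps Ss]] := core gA.
  by rewrite (pi_eq (proj1 gA) Ps).
- move=> g h gA hA B; have [s /andP [Ps _]] := core gA; have [t /andP [Pt _]] := core hA.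
  have ghU : g *m h \in unitmx by rewrite unitmx_mul (proj1 gA) (proj1 hA).
  by rewrite (pi_eq ghU (Pg_mul Ps Pt)) (pi_eq (proj1 gA) Ps) (pi_eq (proj1 hA) Pt) permM.
- move=> s Ss; exists (qiota q s); first exact: qiota_aut.
  exact: pi_eq (proj1 (qiota_aut Ss)) (qiota_P Ss).
- move=> g gA; have [s /andP [Ps _]] := core gA; rewrite (pi_eq (proj1 gA) Ps).
  split => [e|HP]; first by rewrite e in Ps; exact: ker_fwd.
  exact: Pg_uniq (proj1 gA) Ps (ker_bwd HP).
- move=> s Ss; split; first exact: qiota_aut.
  exact: pi_eq (proj1 (qiota_aut Ss)) (qiota_P Ss).
Qed.

End Blocks.

Theorem proposition2p6 (k : fieldType) (n : nat) (q : 'M[k]_n) :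
  qparam q ->
  exists pi : 'M[k]_n -> {perm {set 'I_n}},
    (* pi maps Aut_gr(S_q(V)) into Stab(q) *)
    (forall g, qAut q g -> qStab q (pi g)) /\
    (* group homomorphism (products = composition of maps) *)
    (forall g h, qAut q g -> qAut q h ->
       forall B, pi (g *m h) B = pi g (pi h B)) /\
    (* surjective onto Stab(q) *)
    (forall s, qStab q s -> exists2 g, qAut q g & pi g = s) /\
    (* kernel = prod_B GL(V_B) *)
    (forall g, qAut q g -> (pi g = 1%g <-> inProdGLblocks q g)) /\
    (* pi o iota = Id *)
    (forall s, qStab q s -> qAut q (qiota q s) /\ pi (qiota q s) = s).
Proof. by move=> qP; exact: main qP. Qed.
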